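(* Let $m\ge3$ and let $T_m$ be the graph defined below. Then $1$ is a simple eigenvalue of $T_m$ if and only if $4\nmid m$ and $5\nmid m$.
   Context: For $m\ge3$, $T_m$ is the cubic graph on $2m^2$ vertices $\{x^+_{i,j},\,x^-_{i,j}\mid i,j\in\mathbb{Z}_m\}$ with edges $\{x^+_{i,j},x^+_{i,j+1}\}$, $\{x^-_{i,j},x^-_{i,j+1}\}$ and $\{x^+_{i,j},x^-_{j,i}\}$ for all $i,j\in\mathbb{Z}_m$. Eigenvalues are those of the adjacency matrix; simple means a $1$-dimensional eigenspace. *)

(* Defs.v *)
From HB Require Import structures.
From mathcomp Require Import all_boot all_order all_algebra all_field.
Set Implicit Arguments. Unset Strict Implicit. Unset Printing Implicit Defensive.
Import GRing.Theory Num.Theory.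
Local Open Scope ring_scope.

(* Vertices of T_m: (s, i, j) with s = true for x^+_{i,j}, s = false for x^-_{i,j};
   i, j range over Z_m, represented by 'I_m with cyclic successor ordS. *)
Definition Tvert (m : nat) : finType := (bool * 'I_m * 'I_m)%type.

(* Directed "generating" edges: {x^s_{i,j}, x^s_{i,j+1}} and {x^+_{i,j}, x^-_{j,i}}. *)
Definition Tgen (m : nat) (u v : Tvert m) : bool :=
  let: (s, i, j) := u in let: (t, k, l) := v in
  [|| (s == t) && (i == k) && (l == ordS j)
    | s && ~~ t && (k == j) && (l == i)].

Definition Tadj (m : nat) (u v : Tvert m) : bool := Tgen u v || Tgen v u.

Definition Tmx (m : nat) : 'M[algC]_#|Tvert m| :=
  \matrix_(a, b) (Tadj (enum_val a) (enum_val b))%:R.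

Definition simple_eigenvalue (F : fieldType) (n : nat) (A : 'M[F]_n) (a : F) : Prop :=
  \rank (eigenspace A a) = 1%N.

(* Main.v *)
Require Import Defs.
From HB Require Import structures.
From mathcomp Require Import all_boot all_order all_algebra all_field.
From mathcomp Require Import ring zify.
Set Implicit Arguments. Unset Strict Implicit. Unset Printing Implicit Defensive.
Import Order.TTheory GRing.Theory Num.Theory.
Local Open Scope ring_scope.

Definition sC (z : algC) := z + z^-1.
Definition Eq (z w : algC) := (1 - sC z) * (1 - sC w) = 1.

Lemma root_neq0 m (z : algC) : (0 < m)%N -> z ^+ m = 1 -> z != 0.
Proof.
move=> m0 zm; apply/eqP=> z0; move: zm; rewrite z0 expr0n.
by case: m m0 => // m _ /= /eqP; rewrite eq_sym oner_eq0.
Qed.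

Lemma root_norm1 m (z : algC) : (0 < m)%N -> z ^+ m = 1 -> `|z| = 1.
Proof.
move=> m0 zm; have: `|z| ^+ m = 1 by rewrite -normrX zm normr1.
by move/eqP; rewrite pexpr_eq1 // => /eqP.
Qed.

Lemma root_inv m (z : algC) : (0 < m)%N -> z ^+ m = 1 -> z^-1 = z^*.
Proof.
by move=> m0 zm; rewrite invC_norm (root_norm1 m0 zm) expr1n invr1 mul1r.
Qed.

Lemma sC_Re m (z : algC) : (0 < m)%N -> z ^+ m = 1 -> sC z = 2 * 'Re z.
Proof.
move=> m0 zm; rewrite ReE /sC (root_inv m0 zm) mulrC divfK //.
by rewrite pnatr_eq0.
Qed.

Lemma sC_real m (z : algC) : (0 < m)%N -> z ^+ m = 1 -> sC z \is Num.real.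
Proof.
by move=> m0 zm; rewrite (sC_Re m0 zm) rpredM ?Creal_Re ?realn.
Qed.

Lemma sC_norm m (z : algC) : (0 < m)%N -> z ^+ m = 1 -> `|sC z| <= 2.
Proof.
move=> m0 zm; rewrite (sC_Re m0 zm) normrM ger0_norm ?ler0n //.
rewrite -{2}[2]mulr1 ler_pM2l ?ltr0n //.
by have := (leif_normC_Re_Creal z).1; rewrite (root_norm1 m0 zm).
Qed.

Lemma sC_ge m (z : algC) : (0 < m)%N -> z ^+ m = 1 -> -2 <= sC z.
Proof.
move=> m0 zm; have [h1 h2] := (elimT (real_ler_normlP (sC_real m0 zm)) (sC_norm m0 zm)).
by rewrite lerNl.
Qed.

Lemma sC_le m (z : algC) : (0 < m)%N -> z ^+ m = 1 -> sC z <= 2.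
Proof.
by move=> m0 zm; have [h1 h2] := (elimT (real_ler_normlP (sC_real m0 zm)) (sC_norm m0 zm)).
Qed.

Lemma sC2 (z : algC) : z != 0 -> sC z = 2 -> z = 1.
Proof.
move=> z0 h; have: (z - 1) ^+ 2 = z * (sC z - 2).
  by rewrite /sC mulrBr mulrDr mulfV //; ring.
rewrite h subrr mulr0 => /eqP; rewrite sqrf_eq0 subr_eq0 => /eqP //.
Qed.

Lemma lemA (s t : algC) : s \is Num.real -> -2 <= s -> s <= 2 -> -2 <= t -> t <= 2 ->
  (1 - s) * (1 - t) = 1 -> s <= 2/3 \/ (s = 2 /\ t = 2).
Proof.
move=> sR s1 s2 t1 t2 e.
have XR : 1 - s \is Num.real by rewrite rpredB ?rpred1.
have Y3 : 1 - t <= 3.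
  by rewrite -subr_ge0 (_ : 3 - (1 - t) = t - (-2)) ?subr_ge0 //; last ring.
have Y1 : -1 <= 1 - t.
  by rewrite -subr_ge0 (_ : 1 - t - (-1) = 2 - t) ?subr_ge0 //; ring.
have X1 : -1 <= 1 - s.
  by rewrite -subr_ge0 (_ : 1 - s - (-1) = 2 - s) ?subr_ge0 //; ring.
case: (real_le0P XR) => [Xle|Xgt].
  have Xlt : 1 - s < 0.
    rewrite Order.POrderTheory.lt_neqAle Xle andbT; apply/eqP => X0; move: e; rewrite X0 mul0r.
    by move/eqP; rewrite eq_sym oner_eq0.
  have : (1 - s) * (1 - t) <= (1 - s) * (-1) by rewrite ler_nM2l.
  rewrite e mulrN1 lerNr => hX.
  have Xe : 1 - s = -1 by apply/eqP; rewrite eq_le hX X1.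
  have se : s = 2.
    apply/eqP; rewrite -subr_eq0 (_ : s - 2 = -(1 - s) - 1); last by ring.
    by rewrite Xe opprK subrr.
  right; split => //.
  move: e; rewrite Xe mulN1r => te.
  apply/eqP; rewrite -subr_eq0 (_ : t - 2 = -(1 - t) - 1); last by ring.
  by rewrite te subrr.
have : (1 - s) * (1 - t) <= (1 - s) * 3 by rewrite ler_pM2l.
rewrite e => h; left.
have : 1/3 <= 1 - s by rewrite ler_pdivrMr ?ltr0n // mulrC.
rewrite lerBrDr -lerBrDl.
have -> : 1 - 1/3 = 2/3 :> algC by field.
done.
Qed.

Lemma root_coprime (x : algC) a b : x ^+ a = 1 -> x ^+ b = 1 -> coprime a b -> x = 1.
Proof.
move=> xa xb cab; case: (posnP a) => [a0|a0].
  by move: cab; rewrite a0 /coprime gcd0n => /eqP b1; move: xb; rewrite b1 expr1.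
have [c _ dv] := Bezoutl b a0; move: dv; rewrite (eqP cab) => dv.
have := expr_dvd xa dv; rewrite exprD expr1 mulnC exprM xb expr1n mulr1 //.
Qed.

Lemma geom0 (x : algC) p : x ^+ p = 1 -> x != 1 -> \sum_(j < p) x ^+ j = 0.
Proof.
move=> xp x1; have := subrX1 x p; rewrite xp subrr => /esym/eqP.
by rewrite mulf_eq0 subr_eq0 (negbTE x1) => /eqP.
Qed.

Lemma powsum0 (y x : algC) p n : x ^+ p = 1 -> x ^+ n != 1 ->
  \sum_(j < p) (y * x ^+ j) ^+ n = 0.
Proof.
move=> xp xn.
rewrite (eq_bigr (fun j : 'I_p => y ^+ n * (x ^+ n) ^+ j)); last first.
  by move=> j _; rewrite exprMn -!exprM mulnC.
by rewrite -mulr_sumr geom0 ?mulr0 // -exprM mulnC exprM xp expr1n.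
Qed.

Lemma quad_contra p (s : 'I_p -> algC) : (0 < p)%N ->
  \sum_j s j = 0 -> \sum_j s j ^+ 2 = 2 * p%:R ->
  (forall j, -2 <= s j) -> (forall j, s j <= 2/3) -> False.
Proof.
move=> p0 e1 e2 hge hle.
have : 0 <= \sum_j (s j + 2) * (2/3 - s j).
  apply: sumr_ge0 => j _; apply: mulr_ge0.
    by rewrite -lerBlDr sub0r.
  by rewrite subr_ge0.
rewrite (eq_bigr (fun j => 4/3 - 4/3 * s j - s j ^+ 2)); last by move=> j _; field.
rewrite !sumrB sumr_const card_ord -mulr_sumr e1 e2 mulr0 subr0.
have -> : 4 / 3 *+ p - 2 * p%:R = - (2/3 * p%:R) :> algC by rewrite -mulr_natr; field.
rewrite oppr_ge0 pmulr_rle0 ?ltr0n // ?divr_gt0 ?ltr0n //.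
by rewrite lern0 => /eqP p00; move: p0; rewrite p00.
Qed.

Lemma f_ge0 (x : algC) : -2 <= x -> x <= 2/3 -> 0 <= (2/3 - x) * (x + 2) ^+ 2.
Proof.
move=> h1 h2; apply: mulr_ge0; first by rewrite subr_ge0.
by rewrite expr2 mulr_ge0 // -lerBlDr sub0r.
Qed.

Lemma f_lb (x : algC) : -2 <= x -> x <= 2 -> - (64/3) <= (2/3 - x) * (x + 2) ^+ 2.
Proof.
move=> h1 h2.
have q0 : 0 <= (x + 2) ^+ 2 by rewrite expr2 mulr_ge0 // -lerBlDr sub0r.
have q16 : (x + 2) ^+ 2 <= 16.
  rewrite expr2 (_ : 16 = 4 * 4 :> algC); last by rewrite -natrM.
  have a0 : 0 <= x + 2 by rewrite -lerBlDr sub0r.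
  have a4 : x + 2 <= 4 by rewrite -lerBrDr (_ : 4 - 2 = 2 :> algC) //; ring.
  by apply: ler_pM.
apply: (@le_trans _ _ (- (4/3) * (x + 2) ^+ 2)).
  rewrite mulNr lerN2 (_ : 64/3 = 4/3 * 16 :> algC); last by field.
  by rewrite ler_pM2l // divr_gt0 ?ltr0n.
rewrite ler_wpM2r //.
by rewrite -subr_ge0 (_ : 2/3 - x - - (4/3) = 2 - x); [rewrite subr_ge0 | field].
Qed.

Lemma cubic_contra p (s : 'I_p -> algC) j0 : (6 < p)%N ->
  \sum_j s j = 0 -> \sum_j s j ^+ 2 = 2 * p%:R -> \sum_j s j ^+ 3 = 0 ->
  (forall j, -2 <= s j) -> (forall j, s j <= 2) ->
  (forall j, j != j0 -> s j <= 2/3) -> False.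
Proof.
move=> p6 e1 e2 e3 hge hle hgood.
have hsum : \sum_j (2/3 - s j) * (s j + 2) ^+ 2 = - (4 * p%:R).
  rewrite (eq_bigr (fun j => 8/3 - 4/3 * s j - 10/3 * s j ^+ 2 - s j ^+ 3)); last first.
    by move=> j _; field.
  rewrite !sumrB sumr_const card_ord -!mulr_sumr e1 e2 e3 mulr0 !subr0.
  by rewrite -mulr_natr; field.
have : - (64/3) <= \sum_j (2/3 - s j) * (s j + 2) ^+ 2.
  rewrite (bigD1 j0) //= -[X in X <= _]addr0; apply: lerD; first exact: f_lb.
  by apply: sumr_ge0 => j hj; apply: f_ge0 => //; apply: hgood.
rewrite hsum lerN2 => h.
have : (4 * p%:R) * 3 <= 64 :> algC.
  by rewrite -ler_pdivlMr ?ltr0n.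
rewrite -!natrM ler_nat => hp; lia.
Qed.

Lemma coprime1M j t : coprime (1 + j * t) t.
Proof. by rewrite /coprime gcdnC addnC gcdnMDl gcdn1. Qed.

Lemma rootX m (z : algC) k : z ^+ m = 1 -> (z ^+ k) ^+ m = 1.
Proof. by move=> zm; rewrite -exprM mulnC exprM zm expr1n. Qed.

Lemma sC_fam (z v : algC) (j : nat) : z != 0 -> v != 0 ->
  sC (z * v ^+ j) = (z * v ^+ j) + (z^-1 * v^-1 ^+ j).
Proof. by move=> z0 v0; rewrite /sC invfM exprVn. Qed.

Lemma sq_sum (a b : algC) : a * b = 1 -> (a + b) ^+ 2 = a ^+ 2 + b ^+ 2 + 2.
Proof.
move=> ab; have -> : (a + b) ^+ 2 = a ^+ 2 + b ^+ 2 + 2 * (a * b) by ring.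
by rewrite ab mulr1.
Qed.

Lemma cube_sum (a b : algC) : a * b = 1 -> (a + b) ^+ 3 = a ^+ 3 + b ^+ 3 + 3 * (a + b).
Proof.
move=> ab; have -> : (a + b) ^+ 3 = a ^+ 3 + b ^+ 3 + 3 * (a * b) * (a + b) by ring.
by rewrite ab mulr1.
Qed.

Lemma famSQ (m t p : nat) (z : algC) : prime p -> odd p -> m = (p * t)%N -> (p %| t)%N ->
  z ^+ m = 1 -> (forall k, coprime k m -> sC (z ^+ k) <= 2/3) -> z ^+ t = 1.
Proof.
move=> pp op mE pt zm hk.
case: (posnP t) => [->|t0]; first by rewrite expr0.
have m0 : (0 < m)%N by rewrite mE muln_gt0 prime_gt0.
case: (eqVneq (z ^+ t) 1) => // v1; exfalso.
set v := z ^+ t in v1.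
have vp : v ^+ p = 1 by rewrite /v -exprM mulnC -mE.
have z0 := root_neq0 m0 zm.
have p0 := prime_gt0 pp.
have v0 : v != 0 := root_neq0 p0 vp.
have vn : forall n, coprime n p -> v ^+ n != 1.
  by move=> n cn; apply/eqP => vn; rewrite (root_coprime vn vp cn) eqxx in v1.
have vin : forall n, coprime n p -> v^-1 ^+ n != 1.
  by move=> n cn; rewrite exprVn invr_eq1; apply: vn.
have vip : v^-1 ^+ p = 1 by rewrite exprVn vp invr1.
have c1 : coprime 1 p by rewrite /coprime gcd1n.
have c2 : coprime 2 p by rewrite coprime2n.
pose s (j : 'I_p) := sC (z * v ^+ j).
have sE : forall j : 'I_p, s j = (z * v ^+ j) + (z^-1 * v^-1 ^+ j).
  by move=> j; rewrite /s sC_fam.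
have yk : forall j : 'I_p, z * v ^+ j = z ^+ (1 + j * t).
  by move=> j; rewrite exprD expr1 mulnC exprM.
have hprod : forall j : 'I_p, (z * v ^+ j) * (z^-1 * v^-1 ^+ j) = 1.
  move=> j; rewrite mulrACA mulfV // exprVn mulfV ?mulr1 //.
  by rewrite expf_neq0.
apply: (@quad_contra p s p0).
- rewrite (eq_bigr _ (fun j _ => sE j)) big_split /=.
  have := powsum0 z vp (vn 1%N c1); have := powsum0 z^-1 vip (vin 1%N c1).
  rewrite (eq_bigr _ (fun j _ => expr1 _)) => ->.
  by rewrite (eq_bigr _ (fun j _ => expr1 _)) => ->; rewrite addr0.
- rewrite (eq_bigr _ (fun j _ => congr1 (fun x => x ^+ 2) (sE j))).
  rewrite (eq_bigr _ (fun j _ => sq_sum (hprod j))) !big_split /=.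
  rewrite (powsum0 z vp (vn 2%N c2)) (powsum0 z^-1 vip (vin 2%N c2)).
  by rewrite !add0r !sumr_const card_ord; ring.
- move=> j; rewrite /s; apply: (sC_ge m0); rewrite yk; exact: rootX.
- move=> j; rewrite /s yk; apply: hk; rewrite mE coprimeMr coprime1M andbT.
  have := coprime1M j t; apply: coprime_dvdr.
  done.
Qed.

Lemma coprime_small n p : prime p -> (0 < n < p)%N -> coprime n p.
Proof.
move=> pp /andP[n0 np]; rewrite coprime_sym prime_coprime //.
by apply/negP => /(dvdn_leq n0); rewrite leqNgt np.
Qed.

Lemma bad_uniq p m' (j j0 : nat) : prime p -> coprime p m' -> (j < p)%N -> (j0 < p)%N ->
  (p %| 1 + j * m')%N -> (p %| 1 + j0 * m')%N -> j = j0.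
Proof.
move=> pp cp jp j0p.
wlog le : j j0 jp j0p / (j0 <= j)%N.
  move=> H; case: (leqP j0 j) => h; first exact: H.
  by move=> a b; apply/esym; apply: H => //; apply: ltnW.
move=> d1 d2; have := dvdn_sub d1 d2; rewrite subnDl -mulnBl Gauss_dvdl //.
case/dvdnP => q hq; have : (j - j0 < p)%N by lia.
rewrite hq; case: q hq => [|q] hq; first by lia.
by rewrite mulSn; lia.
Qed.

Lemma famCU (m m' p : nat) (z : algC) : prime p -> (6 < p)%N -> m = (p * m')%N ->
  coprime p m' -> z ^+ m = 1 ->
  (forall k, coprime k m -> sC (z ^+ k) <= 2/3) -> z ^+ m' = 1.
Proof.
move=> pp p6 mE cp zm hk.
case: (posnP m') => [->|t0]; first by rewrite expr0.
have p0 := prime_gt0 pp.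
have m0 : (0 < m)%N by rewrite mE muln_gt0 p0.
case: (eqVneq (z ^+ m') 1) => // v1; exfalso.
set v := z ^+ m' in v1.
have vp : v ^+ p = 1 by rewrite /v -exprM mulnC -mE.
have z0 := root_neq0 m0 zm.
have v0 : v != 0 := root_neq0 p0 vp.
have vn : forall n, coprime n p -> v ^+ n != 1.
  by move=> n cn; apply/eqP => vn; rewrite (root_coprime vn vp cn) eqxx in v1.
have vin : forall n, coprime n p -> v^-1 ^+ n != 1.
  by move=> n cn; rewrite exprVn invr_eq1; apply: vn.
have vip : v^-1 ^+ p = 1 by rewrite exprVn vp invr1.
have c1 : coprime 1 p by apply: coprime_small => //; lia.
have c2 : coprime 2 p by apply: coprime_small => //; lia.
have c3 : coprime 3 p by apply: coprime_small => //; lia.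
pose s (j : 'I_p) := sC (z * v ^+ j).
have sE : forall j : 'I_p, s j = (z * v ^+ j) + (z^-1 * v^-1 ^+ j).
  by move=> j; rewrite /s sC_fam.
have yk : forall j : 'I_p, z * v ^+ j = z ^+ (1 + j * m').
  by move=> j; rewrite exprD expr1 mulnC exprM.
have hprod : forall j : 'I_p, (z * v ^+ j) * (z^-1 * v^-1 ^+ j) = 1.
  move=> j; rewrite mulrACA mulfV // exprVn mulfV ?mulr1 //.
  by rewrite expf_neq0.
have e1 : \sum_j s j = 0.
  rewrite (eq_bigr _ (fun j _ => sE j)) big_split /=.
  have := powsum0 z vp (vn 1%N c1); have := powsum0 z^-1 vip (vin 1%N c1).
  rewrite (eq_bigr _ (fun j _ => expr1 _)) => ->.
  by rewrite (eq_bigr _ (fun j _ => expr1 _)) => ->; rewrite addr0.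
have hge : forall j, -2 <= s j.
  move=> j; rewrite /s; apply: (sC_ge m0); rewrite yk; exact: rootX.
have hle : forall j, s j <= 2.
  move=> j; rewrite /s; apply: (sC_le m0); rewrite yk; exact: rootX.
have good : forall j : 'I_p, ~~ (p %| 1 + j * m')%N -> s j <= 2/3.
  move=> j hj; rewrite /s yk; apply: hk; rewrite mE coprimeMr coprime1M andbT.
  by rewrite coprime_sym prime_coprime.
have j0ex : exists j0 : 'I_p, forall j, j != j0 -> s j <= 2/3.
  case: (pickP (fun j : 'I_p => (p %| 1 + j * m')%N)) => [j0 hj0 | none].
    exists j0 => j hj; apply: good; apply/negP => hj'; move/eqP: hj; apply.
    by apply: val_inj; apply: (bad_uniq pp cp (ltn_ord j) (ltn_ord j0)).
  by exists (Ordinal p0) => j _; apply: good; rewrite none.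
have [j0 hj0] := j0ex.
apply: (@cubic_contra p s j0 p6 e1) => //.
- rewrite (eq_bigr _ (fun j _ => congr1 (fun x => x ^+ 2) (sE j))).
  rewrite (eq_bigr _ (fun j _ => sq_sum (hprod j))) !big_split.
  rewrite (powsum0 z vp (vn 2%N c2)) (powsum0 z^-1 vip (vin 2%N c2)).
  by rewrite /= !add0r !sumr_const card_ord; ring.
- rewrite (eq_bigr _ (fun j _ => congr1 (fun x => x ^+ 3) (sE j))).
  rewrite (eq_bigr _ (fun j _ => cube_sum (hprod j))) !big_split.
  rewrite (powsum0 z vp (vn 3%N c3)) (powsum0 z^-1 vip (vin 3%N c3)) -mulr_sumr.
  rewrite (eq_bigr _ (fun j _ => esym (sE j))) e1.
  by rewrite /= mulr0 !addr0.
Qed.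

Lemma galE (m : nat) (z w : algC) k : z ^+ m = 1 -> w ^+ m = 1 -> coprime k m ->
  Eq z w -> Eq (z ^+ k) (w ^+ k).
Proof.
move=> zm wm ck e; have [u Hu] := Qn_aut_exists ck.
have := congr1 u e; rewrite rmorph1 /Eq /sC rmorphM !rmorphB !rmorphD !rmorph1 /=.
by rewrite !fmorphV /= (Hu z zm) (Hu w wm).
Qed.

Lemma sCmul (z : algC) : z != 0 -> sC z * z = z ^+ 2 + 1.
Proof. by move=> z0; rewrite /sC mulrDl mulVf // expr2. Qed.

Lemma two3_lt1 : (2/3 : algC) < 1.
Proof. by rewrite ltr_pdivrMr ?ltr0n // mul1r ltr_nat. Qed.

Lemma six (z : algC) : z ^+ 6 = 1 -> sC z <= 2/3 -> sC z = -2 \/ sC z = -1.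
Proof.
move=> z6 hs.
have z0 : z != 0 := root_neq0 (isT : (0 < 6)%N) z6.
have : (z - 1) * (z + 1) * (z ^+ 2 + z + 1) * (z ^+ 2 - z + 1) = 0.
  have -> : (z - 1) * (z + 1) * (z ^+ 2 + z + 1) * (z ^+ 2 - z + 1) = z ^+ 6 - 1 by ring.
  by rewrite z6 subrr.
move/eqP; rewrite !mulf_eq0 -!orbA => /or4P [h|h|h|h].
- exfalso; move: h; rewrite subr_eq0 => /eqP z1.
  move: hs; rewrite z1 /sC invr1 => h.
  by have := le_lt_trans h two3_lt1; rewrite -[X in _ < X]addr0 ltrD2l ltr10.
- left; move: h; rewrite addr_eq0 => /eqP ->; rewrite /sC invrN1; ring.
- right; apply/eqP; rewrite -subr_eq0 opprK.
  have : (sC z + 1) * z = 0 by rewrite mulrDl sCmul // mul1r -(eqP h); ring.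
  by move/eqP; rewrite mulf_eq0 (negbTE z0) orbF.
- exfalso.
  have : (sC z - 1) * z = 0 by rewrite mulrBl sCmul // mul1r -(eqP h); ring.
  move/eqP; rewrite mulf_eq0 (negbTE z0) orbF subr_eq0 => /eqP s1.
  move: hs; rewrite s1 => h1.
  by have := le_lt_trans h1 two3_lt1; rewrite ltxx.
Qed.

Lemma natC_neq1 n : n != 1%N -> (n%:R : algC) != 1.
Proof. by move=> h; rewrite -[1 : algC]/(1%:R) eqr_nat. Qed.

Lemma natC_ne1' n : n != 1%N -> (n%:R : algC) = 1 -> False.
Proof. by move=> h e; move: (natC_neq1 h); rewrite e eqxx. Qed.

Lemma prime_cases p : prime p -> [|| p == 2, p == 3, p == 5 | 6 < p]%N.
Proof. by case: p => [|[|[|[|[|[|[|q]]]]]]]. Qed.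

Lemma Eq_sym z w : Eq z w -> Eq w z.
Proof. by rewrite /Eq mulrC. Qed.

Lemma conj_bound m (z w : algC) : (0 < m)%N -> z ^+ m = 1 -> w ^+ m = 1 ->
  (forall k, coprime k m -> Eq (z ^+ k) (w ^+ k)) -> ~ (z = 1 /\ w = 1) ->
  forall k, coprime k m -> sC (z ^+ k) <= 2/3.
Proof.
move=> m0 zm wm H hnot k ck.
have zk := rootX k zm; have wk := rootX k wm.
case: (lemA (sC_real m0 zk) (sC_ge m0 zk) (sC_le m0 zk) (sC_ge m0 wk) (sC_le m0 wk) (H k ck)) => // [[s2 t2]].
exfalso; apply: hnot; split.
  exact: (root_coprime (sC2 (root_neq0 m0 zk) s2) zm ck).
exact: (root_coprime (sC2 (root_neq0 m0 wk) t2) wm ck).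
Qed.

Lemma six_contra (z w : algC) : z ^+ 6 = 1 -> w ^+ 6 = 1 -> sC z <= 2/3 -> sC w <= 2/3 ->
  Eq z w -> False.
Proof.
move=> z6 w6 hz hw; rewrite /Eq.
case: (six z6 hz) => ->; case: (six w6 hw) => ->.
- by rewrite (_ : _ * _ = 9%:R); [exact: natC_ne1' | ring].
- by rewrite (_ : _ * _ = 6%:R); [exact: natC_ne1' | ring].
- by rewrite (_ : _ * _ = 6%:R); [exact: natC_ne1' | ring].
- by rewrite (_ : _ * _ = 4%:R); [exact: natC_ne1' | ring].
Qed.

Lemma NT m : (0 < m)%N -> ~~ (4 %| m)%N -> ~~ (5 %| m)%N ->
  forall z w : algC, z ^+ m = 1 -> w ^+ m = 1 ->
  (forall k, coprime k m -> Eq (z ^+ k) (w ^+ k)) -> z = 1 /\ w = 1.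
Proof.
elim/ltn_ind: m => m IH m0 n4 n5 z w zm wm H.
case: (boolP ((z == 1) && (w == 1))) => [/andP[/eqP -> /eqP ->] // | hn].
have hnot : ~ (z = 1 /\ w = 1) by move=> [z1 w1]; rewrite z1 w1 !eqxx in hn.
have pz := conj_bound m0 zm wm H hnot.
have pw := conj_bound m0 wm zm (fun k ck => Eq_sym (H k ck))
   (fun h => hnot (conj h.2 h.1)).
exfalso.
have red : forall t, (t %| m)%N -> (t < m)%N -> (0 < t)%N -> z ^+ t = 1 -> w ^+ t = 1 ->
    (forall k, coprime k t -> Eq (z ^+ k) (w ^+ k)) -> False.
  move=> t tm tlt t0 zt wt Ht; apply: hnot; apply: (IH t tlt t0 _ _ z w zt wt Ht).
    by apply/negP => h4; move: n4; rewrite (dvdn_trans h4 tm).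
  by apply/negP => h5; move: n5; rewrite (dvdn_trans h5 tm).
have divfacts : forall p, prime p -> (p %| m)%N ->
    [/\ (m %/ p %| m)%N, (m %/ p < m)%N, (0 < m %/ p)%N & m = (p * (m %/ p))%N].
  move=> p pp pm; split.
  - by rewrite -{2}(divnK pm) dvdn_mulr.
  - by rewrite ltn_Pdiv ?prime_gt1.
  - by rewrite divn_gt0 ?prime_gt0 // dvdn_leq.
  - by rewrite mulnC divnK.
have sq : forall p, prime p -> odd p -> (p * p %| m)%N -> False.
  move=> p pp op ppm.
  have pm : (p %| m)%N by apply: dvdn_trans ppm; apply: dvdn_mulr.
  have [tm tlt t0 mE] := divfacts p pp pm.
  have pt : (p %| m %/ p)%N by rewrite dvdn_divRL.
  have Ht : forall k, coprime k (m %/ p) -> coprime k m.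
    by move=> k ck; rewrite mE coprimeMr ck andbT; apply: coprime_dvdr pt ck.
  apply: (red _ tm tlt t0).
  - exact: (famSQ pp op mE pt zm (fun k ck => pz k ck)).
  - exact: (famSQ pp op mE pt wm (fun k ck => pw k ck)).
  - by move=> k ck; apply: H; apply: Ht.
set g := gcdn m 6; set n := (m %/ g)%N.
have g0 : (0 < g)%N by rewrite gcdn_gt0 orbT.
have mE : m = (n * g)%N by rewrite /n divnK // dvdn_gcdl.
have c1 : coprime 1 m by rewrite /coprime gcd1n.
case: (eqVneq n 1%N) => [n1 | n1].
  have m6 : (m %| 6)%N by rewrite mE n1 mul1n dvdn_gcdr.
  have z6 := expr_dvd zm m6; have w6 := expr_dvd wm m6.
  have := H 1%N c1; rewrite !expr1 => e.
  have := pz 1%N c1; have := pw 1%N c1; rewrite !expr1 => hw hz.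
  exact: (six_contra z6 w6 hz hw e).
have n0 : (0 < n)%N by move: m0; rewrite mE muln_gt0 => /andP[].
have n1' : (1 < n)%N by rewrite ltn_neqAle eq_sym n1 n0.
have pp := pdiv_prime n1'.
have pn : (pdiv n %| n)%N := pdiv_dvd n.
have pm : (pdiv n %| m)%N by rewrite mE dvdn_mulr.
have pg : forall q, (q %| n)%N -> (q %| 6)%N -> (q * q %| m)%N.
  move=> q qn q6; rewrite mE dvdn_mul //.
  by rewrite dvdn_gcd q6 andbT; apply: dvdn_trans qn _; rewrite /n -{2}(divnK (dvdn_gcdl m 6)) dvdn_mulr.
move: (prime_cases pp) => /or4P [/eqP p2|/eqP p3|/eqP p5|p6].
- by move: n4; rewrite (pg 2%N) // -p2.
- by apply: (sq 3%N) => //; apply: (pg 3%N) => //; rewrite -p3.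
- by move: n5; rewrite -p5 pm.
set p := pdiv n in pp pn pm p6.
have op : odd p.
  by case: (even_prime pp) => // p2; rewrite p2 in p6.
case: (boolP (p * p %| m)%N) => [ppm | nppm]; first exact: (sq p pp op ppm).
have [tm tlt t0 mE'] := divfacts p pp pm.
have cp : coprime p (m %/ p) by rewrite prime_coprime // dvdn_divRL.
have zt := famCU pp p6 mE' cp zm (fun k ck => pz k ck).
have wt := famCU pp p6 mE' cp wm (fun k ck => pw k ck).
apply: (red _ tm tlt t0 zt wt) => k ck.
case: (boolP (p %| k)%N) => pk.
  have ck' : coprime (k + m %/ p) m.
    rewrite [X in coprime _ X]mE' coprimeMr; apply/andP; split.
      rewrite coprime_sym prime_coprime //.
      by apply/negP => h; move: cp; rewrite prime_coprime // -(dvdn_addr _ pk) h.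
    by rewrite /coprime gcdnC gcdnDr gcdnC.
  have := H _ ck'.
  by rewrite !exprD zt wt !mulr1.
have ck' : coprime k m.
  rewrite [X in coprime _ X]mE' coprimeMr ck andbT.
  by rewrite coprime_sym prime_coprime.
exact: H.
Qed.

Section Graph.
Variable m : nat.
Local Notation V := (Tvert m).

Definition n1 (v : V) : V := let: (s, i, j) := v in (s, i, ord_pred j).
Definition n2 (v : V) : V := let: (s, i, j) := v in (s, i, ordS j).
Definition n3 (v : V) : V := let: (s, i, j) := v in (~~ s, j, i).

Lemma eqS_pred (j j' : 'I_m) : (j == ordS j') = (j' == ord_pred j).
Proof. by apply/eqP/eqP => ->; [rewrite ordSK | rewrite ord_predK]. Qed.

Lemma Tadj_nb (u v : V) : Tadj u v = [|| u == n1 v, u == n2 v | u == n3 v].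
Proof.
case: u => [[s' i'] j']; case: v => [[s i] j].
rewrite /Tadj /Tgen /n1 /n2 /n3 !xpair_eqE eqS_pred.
by case: s; case: s' => /=; rewrite ?andbT ?andbF ?orbF ?andbT /= ?[i == i']eq_sym //;
  rewrite [i == j']eq_sym [j == i']eq_sym andbC.
Qed.

Hypothesis m3 : (2 < m)%N.

Lemma pred_neq_S (j : 'I_m) : ord_pred j != ordS j.
Proof.
apply/eqP => /(congr1 (@ordS m)); rewrite ord_predK => /(congr1 val) /= h.
have e2 : (((j.+1 %% m).+1) %% m = (j + 2) %% m)%N.
  by rewrite -addn1 modnDml -addn1 -addnA.
have : (j + 0 == j + 2 %[mod m])%N.
  by rewrite addn0 {1}h modn_mod e2.
rewrite eqn_modDl mod0n modn_small //.
Qed.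

Lemma nb_distinct (v : V) : [/\ n1 v != n2 v, n1 v != n3 v & n2 v != n3 v].
Proof.
case: v => [[s i] j]; rewrite /n1 /n2 /n3 !xpair_eqE.
by rewrite !eqxx (negbTE (pred_neq_S j)); case: s.
Qed.

Lemma sum_delta (phi : V -> algC) (x : V) : \sum_u phi u * (u == x)%:R = phi x.
Proof.
rewrite (bigD1 x) //= eqxx mulr1 big1 ?addr0 // => u /negbTE ->.
by rewrite mulr0.
Qed.

Lemma nbsum (phi : V -> algC) (v : V) :
  \sum_u phi u * (Tadj u v)%:R = phi (n1 v) + phi (n2 v) + phi (n3 v).
Proof.
have [d12 d13 d23] := nb_distinct v.
rewrite -!sum_delta -!big_split /=; apply: eq_bigr => u _.
rewrite Tadj_nb -!mulrDr; congr (_ * _).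
case: (eqVneq u (n1 v)) => [->|h1] /=.
  by rewrite (negbTE d12) (negbTE d13) !addr0.
case: (eqVneq u (n2 v)) => [->|h2] /=.
  by rewrite (negbTE d23) !addr0 add0r.
by rewrite !add0r.
Qed.

Definition rv (phi : V -> algC) : 'rV[algC]_#|V| := \row_a phi (enum_val a).

Lemma rvK (x : 'rV[algC]_#|V|) : x = rv (fun v => x 0 (enum_rank v)).
Proof. by apply/rowP => a; rewrite mxE enum_valK. Qed.

Lemma rv_mul (phi : V -> algC) b :
  (rv phi *m Tmx m) 0 b = \sum_u phi u * (Tadj u (enum_val b))%:R.
Proof.
rewrite mxE [RHS](reindex (@enum_val _ (pred_of_simpl (@predT V)))) /=; last first.
  by exists enum_rank => x _; [exact: enum_valK | exact: enum_rankK].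
by apply: eq_bigr => a _; rewrite !mxE.
Qed.

Definition kerP (phi : V -> algC) := forall v, phi (n1 v) + phi (n2 v) + phi (n3 v) = phi v.

Lemma kerE (phi : V -> algC) : (rv phi <= eigenspace (Tmx m) 1)%MS <-> kerP phi.
Proof.
split.
  move/eigenspaceP; rewrite scale1r => /rowP h v.
  have := h (enum_rank v); rewrite rv_mul enum_rankK nbsum mxE enum_rankK //.
move=> h; apply/eigenspaceP; rewrite scale1r; apply/rowP => b.
by rewrite rv_mul nbsum h mxE.
Qed.


Lemma m0 : (0 < m)%N. Proof. by apply: leq_trans m3. Qed.

Lemma expS (x : algC) (j : 'I_m) : x ^+ m = 1 -> x ^+ (ordS j) = x * x ^+ j.
Proof. by move=> xm; rewrite /= expr_mod // exprS. Qed.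

Lemma expP (x : algC) (j : 'I_m) : x ^+ m = 1 -> x ^+ (ord_pred j) = x^-1 * x ^+ j.
Proof.
move=> xm; rewrite /= expr_mod //.
have x0 : x != 0 := root_neq0 m0 xm.
rewrite -subn1 -addnBA ?m0 // exprD mulrC; congr (_ * _).
apply: (mulIf x0); rewrite mulVf // -exprSr subn1 prednK ?m0 //.
Qed.

Definition phiZW (z w : algC) (v : V) : algC :=
  let: (s, i, j) := v in if s then z ^+ i * w ^+ j else (1 - sC w) * (z ^+ j * w ^+ i).

Lemma phi_ker (z w : algC) : z ^+ m = 1 -> w ^+ m = 1 -> Eq z w -> kerP (phiZW z w).
Proof.
move=> zm wm e [[s i] j]; case: s; rewrite /= ?(expS _ zm) ?(expS _ wm) ?(expP _ zm) ?(expP _ wm).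
  by rewrite /sC; ring.
set c := 1 - sC w.
have key : c * z^-1 + c * z + 1 = c.
  move: e; rewrite /Eq -/c /sC => e.
  have -> : c * z^-1 + c * z + 1 = c + (1 - (1 - (z + z^-1)) * c) by ring.
  by rewrite e subrr addr0.
by rewrite -[in RHS]key; ring.
Qed.


Definition o0 : 'I_m := Ordinal m0.
Definition o1 : 'I_m := Ordinal (leq_trans (isT : (1 < 3)%N) m3).

Lemma rv_entry (phi : V -> algC) v : rv phi 0 (enum_rank v) = phi v.
Proof. by rewrite mxE enum_rankK. Qed.

Lemma phi0_ker : kerP (phiZW 1 1).
Proof. by apply: phi_ker; rewrite ?expr1n // /Eq /sC invr1; ring. Qed.

Lemma x0_neq0 : rv (phiZW 1 1) != 0.
Proof.
apply/eqP => /rowP /(_ (enum_rank (true, o0, o0))); rewrite rv_entry mxE /= !expr1n mulr1.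
by move/eqP; rewrite oner_eq0.
Qed.

Lemma nonsimple (z w : algC) : z ^+ m = 1 -> w ^+ m = 1 -> Eq z w -> z != 1 ->
  \rank (eigenspace (Tmx m) 1) != 1%N.
Proof.
move=> zm wm e z1; apply/eqP => r1.
have h0 : (rv (phiZW 1 1) <= eigenspace (Tmx m) 1)%MS by apply/kerE; exact: phi0_ker.
have h1 : (rv (phiZW z w) <= eigenspace (Tmx m) 1)%MS by apply/kerE; exact: phi_ker.
have := mxrank_leqif_sup h0; rewrite r1 rank_rV x0_neq0 => -[_ hq].
have hsub : (eigenspace (Tmx m) 1 <= rv (phiZW 1 1))%MS by rewrite -hq.
have /sub_rVP [a ha] := submx_trans h1 hsub.
move/rowP: ha => ha.
have ea := ha (enum_rank (true, o1, o0)).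
have eb := ha (enum_rank (true, o0, o0)).
move: ea eb; rewrite /= !mxE !enum_rankK /= !expr0 !expr1 !mulr1 => ea eb.
by move: z1; rewrite ea -eb eqxx.
Qed.


Definition Fh (H : 'I_m -> 'I_m -> algC) (z w : algC) :=
  \sum_(i < m) \sum_(j < m) H i j * (z ^+ i * w ^+ j).

Lemma FhE H z w : Fh H z w = \sum_(i < m) z ^+ i * \sum_(j < m) H i j * w ^+ j.
Proof.
by apply: eq_bigr => i _; rewrite mulr_sumr; apply: eq_bigr => j _; rewrite mulrCA.
Qed.

Lemma FhE' H z w : Fh H z w = \sum_(j < m) w ^+ j * \sum_(i < m) H i j * z ^+ i.
Proof.
rewrite /Fh exchange_big /=; apply: eq_bigr => j _; rewrite mulr_sumr.
by apply: eq_bigr => i _; ring.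
Qed.

Lemma Fh_ext H1 H2 z w : (forall i j, H1 i j = H2 i j) -> Fh H1 z w = Fh H2 z w.
Proof. by move=> h; apply: eq_bigr => i _; apply: eq_bigr => j _; rewrite h. Qed.

Lemma FhD H1 H2 z w : Fh (fun i j => H1 i j + H2 i j) z w = Fh H1 z w + Fh H2 z w.
Proof.
rewrite /Fh -big_split; apply: eq_bigr => i _; rewrite -big_split.
by apply: eq_bigr => j _; rewrite mulrDl.
Qed.

Lemma shiftP1 (x : algC) (h : 'I_m -> algC) : x ^+ m = 1 ->
  \sum_(j < m) h (ord_pred j) * x ^+ j = x * \sum_(j < m) h j * x ^+ j.
Proof.
move=> xm; rewrite (reindex_inj (@ordS_inj m)) mulr_sumr; apply: eq_bigr => j _.
by rewrite ordSK expS // mulrCA.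
Qed.

Lemma shiftS1 (x : algC) (h : 'I_m -> algC) : x ^+ m = 1 ->
  \sum_(j < m) h (ordS j) * x ^+ j = x^-1 * \sum_(j < m) h j * x ^+ j.
Proof.
move=> xm; rewrite (reindex_inj (@ord_pred_inj m)) mulr_sumr; apply: eq_bigr => j _.
by rewrite ord_predK expP // mulrCA.
Qed.

Lemma FhPj H z w : w ^+ m = 1 -> Fh (fun i j => H i (ord_pred j)) z w = w * Fh H z w.
Proof.
move=> wm; rewrite !FhE mulr_sumr; apply: eq_bigr => i _.
by rewrite (shiftP1 (H i) wm) mulrCA.
Qed.

Lemma FhSj H z w : w ^+ m = 1 -> Fh (fun i j => H i (ordS j)) z w = w^-1 * Fh H z w.
Proof.
move=> wm; rewrite !FhE mulr_sumr; apply: eq_bigr => i _.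
by rewrite (shiftS1 (H i) wm) mulrCA.
Qed.

Lemma FhPi H z w : z ^+ m = 1 -> Fh (fun i j => H (ord_pred i) j) z w = z * Fh H z w.
Proof.
move=> zm; rewrite !FhE' mulr_sumr; apply: eq_bigr => j _.
by rewrite (shiftP1 (H^~ j) zm) mulrCA.
Qed.

Lemma FhSi H z w : z ^+ m = 1 -> Fh (fun i j => H (ordS i) j) z w = z^-1 * Fh H z w.
Proof.
move=> zm; rewrite !FhE' mulr_sumr; apply: eq_bigr => j _.
by rewrite (shiftS1 (H^~ j) zm) mulrCA.
Qed.

Section Eqs.
Variables F G : 'I_m -> 'I_m -> algC.
Hypothesis hA : forall i j, F i (ord_pred j) + F i (ordS j) + G i j = F i j.
Hypothesis hB : forall i j, G (ord_pred i) j + G (ordS i) j + F i j = G i j.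

Lemma FhG z w : z ^+ m = 1 -> w ^+ m = 1 -> Fh G z w = (1 - sC w) * Fh F z w.
Proof.
move=> zm wm.
have := Fh_ext z w hA; rewrite !FhD FhPj // FhSj // => e.
have -> : Fh G z w = (w * Fh F z w + w^-1 * Fh F z w + Fh G z w) - (w + w^-1) * Fh F z w by ring.
by rewrite e /sC; ring.
Qed.

Lemma FhF_Eq z w : z ^+ m = 1 -> w ^+ m = 1 -> Fh F z w != 0 -> Eq z w.
Proof.
move=> zm wm nz.
have := Fh_ext z w hB; rewrite !FhD FhPi // FhSi // (FhG zm wm) => e.
apply: (mulIf nz); rewrite mul1r.
have -> : (1 - sC z) * (1 - sC w) * Fh F z w =
  (1 - sC w) * Fh F z w - (z * ((1 - sC w) * Fh F z w) + z^-1 * ((1 - sC w) * Fh F z w)).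
  by rewrite /sC; ring.
by rewrite -[X in X - _]e; ring.
Qed.
End Eqs.

Section Inv.
Variable zeta : algC.
Hypothesis prim : m.-primitive_root zeta.

Lemma zeta_m : zeta ^+ m = 1. Proof. exact: prim_expr_order prim. Qed.
Lemma zeta0 : zeta != 0. Proof. exact: root_neq0 m0 zeta_m. Qed.

Lemma orth (i i0 : 'I_m) :
  \sum_(a < m) (zeta ^+ a) ^+ i * ((zeta ^+ a) ^+ i0)^-1 = if i == i0 then m%:R else 0.
Proof.
set x := zeta ^+ i * (zeta ^+ i0)^-1.
have e : forall a : 'I_m, (zeta ^+ a) ^+ i * ((zeta ^+ a) ^+ i0)^-1 = x ^+ a.
  by move=> a; rewrite exprMn -!exprM exprVn -!exprM !(mulnC a).
rewrite (eq_bigr _ (fun a _ => e a)).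
have z0 := zeta0.
case: eqP => [ii0 | ne].
  rewrite /x ii0 mulfV ?expf_neq0 //.
  by rewrite (eq_bigr _ (fun a _ => expr1n _ _)) sumr_const card_ord.
apply: geom0.
  by rewrite exprMn -exprVn -!exprM !(mulnC _ m) !exprM zeta_m !expr1n exprVn zeta_m invr1 expr1n mulr1.
apply/eqP => x1; apply: ne; apply: val_inj => /=.
have : zeta ^+ i == zeta ^+ i0.
  have -> : zeta ^+ i = x * zeta ^+ i0 by rewrite /x mulfVK ?expf_neq0.
  by rewrite x1 mul1r.
rewrite (eq_prim_root_expr prim) !modn_small //.
by move/eqP.
Qed.

Definition wt (a b : 'I_m) (i0 j0 : nat) :=
  ((zeta ^+ a) ^+ i0)^-1 * ((zeta ^+ b) ^+ j0)^-1.

Lemma S2 H (i0 j0 : 'I_m) :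
  \sum_(a < m) \sum_(b < m) Fh H (zeta ^+ a) (zeta ^+ b) * wt a b i0 j0 =
  m%:R * m%:R * H i0 j0.
Proof.
have step1 : forall a b : 'I_m, Fh H (zeta ^+ a) (zeta ^+ b) * wt a b i0 j0 =
   \sum_(i < m) \sum_(j < m) H i j *
     (((zeta ^+ a) ^+ i * ((zeta ^+ a) ^+ i0)^-1) * ((zeta ^+ b) ^+ j * ((zeta ^+ b) ^+ j0)^-1)).
  move=> a b; rewrite /Fh /wt mulr_suml; apply: eq_bigr => i _.
  by rewrite mulr_suml; apply: eq_bigr => j _; ring.
under eq_bigr => a _ do under eq_bigr => b _ do rewrite step1.
under eq_bigr => a _ do rewrite exchange_big.
rewrite exchange_big.
under eq_bigr => i _ do under eq_bigr => a _ do rewrite exchange_big.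
under eq_bigr => i _ do rewrite exchange_big.
have inner : forall i j : 'I_m,
  \sum_(a < m) \sum_(b < m) H i j *
     (((zeta ^+ a) ^+ i * ((zeta ^+ a) ^+ i0)^-1) * ((zeta ^+ b) ^+ j * ((zeta ^+ b) ^+ j0)^-1))
  = H i j * ((\sum_(a < m) (zeta ^+ a) ^+ i * ((zeta ^+ a) ^+ i0)^-1) *
             (\sum_(b < m) (zeta ^+ b) ^+ j * ((zeta ^+ b) ^+ j0)^-1)).
  move=> i j; rewrite mulr_suml mulr_sumr; apply: eq_bigr => a _.
  by rewrite !mulr_sumr; apply: eq_bigr => b _.
under eq_bigr => i _ do under eq_bigr => j _ do rewrite inner !orth.
rewrite (bigD1 i0) //= [X in _ + X]big1 ?addr0; last first.
  by move=> i /negbTE ni; apply: big1 => j _; rewrite ni !mul0r mulr0.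
rewrite (bigD1 j0) //= [X in _ + X]big1 ?addr0; last first.
  by move=> j /negbTE nj; rewrite nj !mulr0.
by rewrite !eqxx; ring.
Qed.

Lemma Fh_inv H : (forall a b : 'I_m, (a != o0) || (b != o0) -> Fh H (zeta ^+ a) (zeta ^+ b) = 0) ->
  forall i j, H i j = H o0 o0.
Proof.
move=> hv.
have S1 : forall i0 j0 : 'I_m,
    \sum_(a < m) \sum_(b < m) Fh H (zeta ^+ a) (zeta ^+ b) * wt a b i0 j0 = Fh H 1 1.
  move=> i0 j0; rewrite (bigD1 o0) //= [X in _ + X]big1 ?addr0; last first.
    by move=> a na; apply: big1 => b _; rewrite hv ?na ?mul0r.
  rewrite (bigD1 o0) //= [X in _ + X]big1 ?addr0; last first.
    by move=> b nb; move: (hv o0 b); rewrite nb orbT => /(_ isT) /= ->; rewrite mul0r.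
  by rewrite /wt !expr0 !expr1n invr1 !mulr1.
have mn0 : (m%:R * m%:R : algC) != 0 by rewrite mulf_neq0 // pnatr_eq0 -lt0n m0.
move=> i j; apply: (mulfI mn0).
by rewrite -S2 S1 -(S1 o0 o0) S2.
Qed.

End Inv.

Lemma prim_idx (zeta : algC) (prim : m.-primitive_root zeta) (a : 'I_m) :
  zeta ^+ a = 1 -> a = o0.
Proof.
move=> za; apply: val_inj => /=.
have hd : (m %| a)%N by rewrite (prim_order_dvd prim) za.
have := ltn_ord a; case: (posnP a) => [->|a0] // ha.
by move: (dvdn_leq a0 hd); rewrite leqNgt ha.
Qed.

Lemma ker_const (n4 : ~~ (4 %| m)%N) (n5 : ~~ (5 %| m)%N) (phi : V -> algC) :
  kerP phi -> exists c, forall v, phi v = c * phiZW 1 1 v.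
Proof.
move=> hk.
pose F i j := phi (true, i, j). pose G i j := phi (false, j, i).
have hA : forall i j, F i (ord_pred j) + F i (ordS j) + G i j = F i j.
  by move=> i j; exact: (hk (true, i, j)).
have hB : forall i j, G (ord_pred i) j + G (ordS i) j + F i j = G i j.
  by move=> i j; exact: (hk (false, j, i)).
have [zeta prim] := C_prim_root_exists m0.
have zm := zeta_m prim.
have vanF : forall a b : 'I_m, (a != o0) || (b != o0) -> Fh F (zeta ^+ a) (zeta ^+ b) = 0.
  move=> a b hab; apply/eqP; move: hab; apply: contraLR => nz.
  have e := FhF_Eq hA hB (rootX a zm) (rootX b zm) nz.
  have [za zb] := NT m0 n4 n5 (rootX a zm) (rootX b zm)
     (fun k ck => galE (rootX a zm) (rootX b zm) ck e).
  by rewrite (prim_idx prim za) (prim_idx prim zb) eqxx.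
have vanG : forall a b : 'I_m, (a != o0) || (b != o0) -> Fh G (zeta ^+ a) (zeta ^+ b) = 0.
  by move=> a b hab; rewrite (FhG hA (rootX a zm) (rootX b zm)) vanF // mulr0.
have Fc := Fh_inv prim vanF; have Gc := Fh_inv prim vanG.
exists (F o0 o0).
have dG : G o0 o0 = - F o0 o0.
  have := hA o0 o0; rewrite !Fc => e.
  have -> : G o0 o0 = (F o0 o0 + F o0 o0 + G o0 o0) - (F o0 o0 + F o0 o0) by ring.
  by rewrite e; ring.
case=> [[s i] j]; case: s => /=.
  by rewrite !expr1n !mulr1; exact: (Fc i j).
rewrite !expr1n mulr1 /sC invr1.
have -> : phi (false, i, j) = G j i by [].
by rewrite Gc dG; ring.
Qed.

End Graph.

Lemma inv_of (x y : algC) : x != 0 -> x * y = 1 -> x^-1 = y.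
Proof. by move=> x0 h; rewrite -[y](mulKf x0) h mulr1. Qed.

Unset Implicit Arguments.

Theorem theorem6p11 (m : nat) (hm : (3 <= m)%N) :
  simple_eigenvalue (Tmx m) 1%R <-> (~~ (4 %| m) && ~~ (5 %| m))%N.
Proof.
have mp : (0 < m)%N := m0 hm.
have [zeta prim] := C_prim_root_exists mp.
have zm := zeta_m prim.
have dvd_small : forall d, (1 < d)%N -> (d %| m)%N -> forall k, (0 < k < d)%N ->
    zeta ^+ (m %/ d * k) != 1.
  move=> d d1 dm k /andP[k0 kd]; rewrite -(prim_order_dvd prim); apply/negP => hd.
  have q0 : (0 < m %/ d)%N by rewrite divn_gt0 ?(ltnW d1) // dvdn_leq.
  have p0 : (0 < m %/ d * k)%N by rewrite muln_gt0 q0 k0.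
  have := dvdn_leq p0 hd.
  have : (m %/ d * k < m %/ d * d)%N by rewrite ltn_pmul2l.
  by rewrite divnK // => h1 h2; move: (leq_trans h1 h2); rewrite ltnn.
rewrite /simple_eigenvalue; split.
- move=> r1; apply/andP; split; apply/negP => hd.
  + set z := zeta ^+ (m %/ 4).
    have z4 : z ^+ 4 = 1 by rewrite -exprM divnK.
    have zm' : z ^+ m = 1 by exact: rootX.
    have z2n : z ^+ 2 != 1 by rewrite -exprM; apply: dvd_small.
    have z2 : z ^+ 2 = -1.
      have : (z ^+ 2) ^+ 2 == 1 by rewrite -exprM z4.
      by rewrite sqrf_eq1 (negbTE z2n) => /eqP.
    have z1 : z != 1 by apply: contraNneq z2n => ->; rewrite expr1n.
    have z0 : z != 0 := root_neq0 mp zm'.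
    have zi : z^-1 = - z by apply: inv_of => //; rewrite mulrN -expr2 z2 opprK.
    have e : Eq z z by rewrite /Eq /sC zi subrr subr0 mulr1.
    by move: (nonsimple hm zm' zm' e z1); rewrite r1.
  + set z := zeta ^+ (m %/ 5).
    have z5 : z ^+ 5 = 1 by rewrite -exprM divnK.
    have zm' : z ^+ m = 1 by exact: rootX.
    have z1 : z != 1 by rewrite -[z]expr1 /z -exprM; apply: dvd_small.
    have z0 : z != 0 := root_neq0 mp zm'.
    have wm' : (z ^+ 2) ^+ m = 1 by exact: rootX.
    have zi : z^-1 = z ^+ 4 by apply: inv_of => //; rewrite -exprS z5.
    have wi : (z ^+ 2)^-1 = z ^+ 3.
      by apply: inv_of; [rewrite expf_neq0 | rewrite -exprD z5].
    have e : Eq z (z ^+ 2).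
      rewrite /Eq /sC zi wi.
      have -> : (1 - (z + z ^+ 4)) * (1 - (z ^+ 2 + z ^+ 3)) = 1 + (z + z ^+ 2) * (z ^+ 5 - 1) by ring.
      by rewrite z5 subrr mulr0 addr0.
    by move: (nonsimple hm zm' wm' e z1); rewrite r1.
- case/andP => n4 n5.
  set E := eigenspace (Tmx m) 1.
  have h0 : (rv (phiZW 1 1) <= E)%MS by apply/kerE => //; exact: phi0_ker.
  have hE : (E <= rv (phiZW 1 1))%MS.
    apply/row_subP => i.
    have hi : (row i E <= E)%MS := row_sub i E.
    have eqr := rvK (row i E).
    rewrite eqr in hi *.
    move/(kerE hm): hi => hk.
    have [c hc] := ker_const hm n4 n5 hk.
    have -> : rv (fun v => row i E 0 (enum_rank v)) = c *: rv (phiZW 1 1).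
      by apply/rowP => a; move: (hc (enum_val a)); rewrite !mxE => ->.
    by apply: scalemx_sub.
  apply/eqP; rewrite eqn_leq; apply/andP; split.
    by have := mxrankS hE; rewrite rank_rV x0_neq0.
  by have := mxrankS h0; rewrite rank_rV x0_neq0.
Qed.
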